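(* Let $\Lambda$ be a singly aligned left cancellative small category. Then \[S_\Lambda=\{\alpha\beta^*:\alpha,\beta\in\Lambda,\ s(\alpha)=s(\beta)\}\cup\{0\}.\] Moreover, for $\alpha,\beta,\gamma,\tau\in\Lambda$ with $s(\alpha)=s(\beta)$ and $s(\gamma)=s(\tau)$, we have $\alpha\beta^*=\gamma\tau^*$ if and only if there is an invertible $u\in\Lambda$ with $\alpha u=\gamma$ and $\beta u=\tau$. The product in $S_\Lambda$ is given by \[\alpha\beta^*\gamma\tau^*=\begin{cases}\alpha\gamma_1(\tau\beta_1)^* & \text{if }\beta\Lambda\cap\gamma\Lambda=\rho\Lambda\text{ with }\rho=\beta\beta_1=\gamma\gamma_1,\\ 0&\text{otherwise,}\end{cases}\] and all products involving $0$ equal $0$.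
   Context: $\Lambda$ is a small category (objects $\Lambda^0$, range $r$, source $s$), left cancellative ($\alpha\beta=\alpha\gamma\Rightarrow\beta=\gamma$), and singly aligned: for all $\alpha,\beta$, $\alpha\Lambda\cap\beta\Lambda$ is either empty or equal to $\rho\Lambda$ for some $\rho\in\Lambda$, where $\alpha\Lambda=\{\alpha\beta:s(\alpha)=r(\beta)\}$. An element $u$ is invertible if $uv=r(u)$ for some $v$. Each $\alpha\in\Lambda$ is the partial bijection $s(\alpha)\Lambda\to\alpha\Lambda$, $\beta\mapsto\alpha\beta$, in the symmetric inverse monoid $\mathcal{I}(\Lambda)$ (composition on largest possible domain, zero = empty map $0$), with inverse $\alpha^*:\alpha\beta\mapsto\beta$; $S_\Lambda$ is the inverse subsemigroup of $\mathcal{I}(\Lambda)$ generated by these maps, and $\alpha\beta^*$ denotes composition. *)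

(* Defs.v *)
(* A small category in "path" convention: [comp a b] is the composite "a b",
   defined (meaningful) when [s a = r b]; [r] = range, [s] = source. *)
Record Cat := {
  Ob : Type;
  Mor : Type;
  r : Mor -> Ob;
  s : Mor -> Ob;
  idm : Ob -> Mor;
  comp : Mor -> Mor -> Mor;
  r_idm : forall v, r (idm v) = v;
  s_idm : forall v, s (idm v) = v;
  r_comp : forall a b, s a = r b -> r (comp a b) = r a;
  s_comp : forall a b, s a = r b -> s (comp a b) = s b;
  comp_idl : forall a, comp (idm (r a)) a = a;
  comp_idr : forall a, comp a (idm (s a)) = a;
  comp_assoc : forall a b c, s a = r b -> s b = r c ->
      comp a (comp b c) = comp (comp a b) c
}.

Arguments r {c0}.
Arguments s {c0}.
Arguments idm {c0}.
Arguments comp {c0}.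

Definition rideal {C : Cat} (a : Mor C) : Mor C -> Prop :=
  fun x => exists b, s a = r b /\ x = comp a b.

Definition left_cancellative (C : Cat) : Prop :=
  forall a b c : Mor C, s a = r b -> s a = r c -> comp a b = comp a c -> b = c.

Definition singly_aligned (C : Cat) : Prop :=
  forall a b : Mor C,
    (forall x, ~ (rideal a x /\ rideal b x)) \/
    (exists rho : Mor C, forall x, (rideal a x /\ rideal b x) <-> rideal rho x).

Definition invertible {C : Cat} (u : Mor C) : Prop :=
  exists v, s u = r v /\ comp u v = idm (r u).

(* Partial maps on a set X, represented by their graphs: [f x y] means f x = y. *)
Definition pmap (X : Type) := X -> X -> Prop.

(* composition f g = "f after g", on the largest possible domain *)
Definition pcomp {X} (f g : pmap X) : pmap X := fun x z => exists y, g x y /\ f y z.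
Definition pinv {X} (f : pmap X) : pmap X := fun x y => f y x.
Definition pzero {X} : pmap X := fun _ _ => False.

(* alpha as the partial bijection s(alpha)Lambda -> alpha Lambda, beta |-> alpha beta *)
Definition embed {C : Cat} (a : Mor C) : pmap (Mor C) :=
  fun x y => r x = s a /\ y = comp a x.
Definition adj {C : Cat} (a : Mor C) : pmap (Mor C) := pinv (embed a).

(* S_Lambda: inverse subsemigroup (with zero) of I(Lambda) generated by the maps alpha *)
Inductive inS (C : Cat) : pmap (Mor C) -> Prop :=
  | inS_gen : forall a : Mor C, inS C (embed a)
  | inS_zero : inS C pzero
  | inS_mul : forall f g, inS C f -> inS C g -> inS C (pcomp f g)
  | inS_inv : forall f, inS C f -> inS C (pinv f).

(* Main.v *)
Require Import Defs.
From Stdlib Require Import FunctionalExtensionality PropExtensionality.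

Lemma pext {X} (f g : pmap X) : (forall x y, f x y <-> g x y) -> f = g.
Proof.
  intros H. apply functional_extensionality; intro x.
  apply functional_extensionality; intro y. apply propositional_extensionality. apply H.
Qed.

Lemma ab_iff (C : Cat) (a b x z : Mor C) :
  pcomp (embed a) (adj b) x z <->
  exists y, r y = s b /\ r y = s a /\ x = comp b y /\ z = comp a y.
Proof.
  unfold pcomp, adj, pinv, embed; split.
  - intros [y [[H1 H2] [H3 H4]]]; exists y; auto.
  - intros [y [H1 [H2 [H3 H4]]]]; exists y; auto.
Qed.

Lemma prod_some (C : Cat) (Hlc : left_cancellative C) (a b c t rho b1 c1 : Mor C) :
  s a = s b -> s c = s t -> s b = r c1 -> s c = r b1 ->
  rho = comp b c1 -> rho = comp c b1 ->
  (forall x, (rideal b x /\ rideal c x) <-> rideal rho x) ->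
  pcomp (pcomp (embed a) (adj b)) (pcomp (embed c) (adj t))
  = pcomp (embed (comp a c1)) (adj (comp t b1)).
Proof.
  intros Hab Hct Hbc1 Hcb1 Hr1 Hr2 Hid.
  assert (Hsr1 : s rho = s c1) by (rewrite Hr1; apply s_comp; auto).
  assert (Hsr2 : s rho = s b1) by (rewrite Hr2; apply s_comp; auto).
  apply pext; intros x z. rewrite ab_iff. split.
  - intros [y [H1 H2]]. apply ab_iff in H1, H2.
    destruct H1 as [w [Hw1 [Hw2 [Hx Hy]]]].
    destruct H2 as [w' [Hw'1 [Hw'2 [Hy' Hz]]]].
    assert (Hr : rideal rho y).
    { apply Hid; split; [exists w'; split; auto | exists w; split; auto]. }
    destruct Hr as [m [Hm Hym]].
    assert (E1 : w = comp b1 m).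
    { apply (Hlc c); auto.
      - rewrite r_comp; congruence.
      - rewrite <- Hy, Hym, Hr2. symmetry; apply comp_assoc; congruence. }
    assert (E2 : w' = comp c1 m).
    { apply (Hlc b); auto.
      - rewrite r_comp; congruence.
      - rewrite <- Hy', Hym, Hr1. symmetry; apply comp_assoc; congruence. }
    exists m. repeat split.
    + rewrite s_comp; congruence.
    + rewrite s_comp; congruence.
    + rewrite Hx, E1. apply comp_assoc; congruence.
    + rewrite Hz, E2. apply comp_assoc; congruence.
  - intros [m [H1 [H2 [H3 H4]]]].
    assert (Hm1 : s t = r b1) by congruence.
    assert (Hm2 : s a = r c1) by congruence.
    rewrite s_comp in H1 by auto. rewrite s_comp in H2 by auto.
    exists (comp c (comp b1 m)). split.
    + apply ab_iff. exists (comp b1 m). repeat split.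
      * rewrite r_comp; congruence.
      * rewrite r_comp; congruence.
      * rewrite H3. symmetry; apply comp_assoc; congruence.
    + apply ab_iff. exists (comp c1 m). repeat split.
      * rewrite r_comp; congruence.
      * rewrite r_comp; congruence.
      * rewrite !comp_assoc by congruence. congruence.
      * rewrite H4. symmetry; apply comp_assoc; congruence.
Qed.

Lemma prod_none (C : Cat) (a b c t : Mor C) :
  (forall x, ~ (rideal b x /\ rideal c x)) ->
  pcomp (pcomp (embed a) (adj b)) (pcomp (embed c) (adj t)) = pzero.
Proof.
  intros Hn. apply pext; intros x z; split; [|intros []].
  intros [y [H1 H2]]. apply ab_iff in H1, H2.
  destruct H1 as [w [Hw1 [Hw2 [Hx Hy]]]].
  destruct H2 as [w' [Hw'1 [Hw'2 [Hy' Hz]]]].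
  apply (Hn y); split; [exists w'; split; auto | exists w; split; auto].
Qed.

Lemma eq_iff (C : Cat) (Hlc : left_cancellative C) (a b c t : Mor C) :
  s a = s b -> s c = s t ->
  (pcomp (embed a) (adj b) = pcomp (embed c) (adj t) <->
   exists u : Mor C, invertible u /\ s a = r u /\ comp a u = c /\ comp b u = t).
Proof.
  intros Hab Hct. split.
  - intros H.
    assert (P1 : pcomp (embed a) (adj b) b a).
    { apply ab_iff. exists (idm (s b)). rewrite r_idm. repeat split; auto.
      - symmetry; apply comp_idr.
      - rewrite <- Hab. symmetry; apply comp_idr. }
    assert (P2 : pcomp (embed c) (adj t) t c).
    { apply ab_iff. exists (idm (s t)). rewrite r_idm. repeat split; auto.
      - symmetry; apply comp_idr.
      - rewrite <- Hct. symmetry; apply comp_idr. }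
    rewrite H in P1. rewrite <- H in P2.
    apply ab_iff in P1, P2.
    destruct P1 as [y' [H1 [H2 [H3 H4]]]].
    destruct P2 as [y [G1 [G2 [G3 G4]]]].
    assert (Hsy : s y = r y').
    { rewrite H1, G3. symmetry; apply s_comp; auto. }
    exists y. repeat split; auto.
    exists y'. split; auto.
    apply (Hlc b).
    + rewrite r_comp; auto.
    + rewrite r_idm; auto.
    + rewrite comp_assoc by auto. rewrite <- G3, <- H3, G1. symmetry; apply comp_idr.
  - intros [u [[v [Hv1 Hv2]] [Hu1 [Hu2 Hu3]]]].
    assert (Hsv : s v = r u).
    { rewrite <- (s_idm C (r u)), <- Hv2. symmetry; apply s_comp; auto. }
    assert (Hsc : s c = s u) by (rewrite <- Hu2; apply s_comp; auto).
    apply pext; intros x z; rewrite !ab_iff; split.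
    + intros [y [H1 [H2 [H3 H4]]]].
      exists (comp v y). repeat split.
      * rewrite r_comp by congruence. congruence.
      * rewrite r_comp by congruence. congruence.
      * assert (Hrv : r (comp v y) = r v) by (apply r_comp; congruence).
        rewrite <- Hu3, <- (comp_assoc C b u (comp v y)) by congruence.
        rewrite (comp_assoc C u v y) by congruence. rewrite Hv2.
        replace (r u) with (r y) by congruence. rewrite comp_idl. auto.
      * assert (Hrv : r (comp v y) = r v) by (apply r_comp; congruence).
        rewrite <- Hu2, <- (comp_assoc C a u (comp v y)) by congruence.
        rewrite (comp_assoc C u v y) by congruence. rewrite Hv2.
        replace (r u) with (r y) by congruence. rewrite comp_idl. auto.
    + intros [w [H1 [H2 [H3 H4]]]].
      exists (comp u w). repeat split.
      * rewrite r_comp by congruence. congruence.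
      * rewrite r_comp by congruence. congruence.
      * rewrite H3, <- Hu3. symmetry; apply comp_assoc; congruence.
      * rewrite H4, <- Hu2. symmetry; apply comp_assoc; congruence.
Qed.

Definition NF (C : Cat) (f : pmap (Mor C)) : Prop :=
  f = pzero \/ exists a b : Mor C, s a = s b /\ f = pcomp (embed a) (adj b).

Lemma pcomp_zero_r {X} (f : pmap X) : pcomp f pzero = pzero.
Proof. apply pext; intros x y; split; [intros [z [[] _]] | intros []]. Qed.
Lemma pcomp_zero_l {X} (f : pmap X) : pcomp pzero f = pzero.
Proof. apply pext; intros x y; split; [intros [z [_ []]] | intros []]. Qed.

Lemma embed_nf (C : Cat) (a : Mor C) : embed a = pcomp (embed a) (adj (idm (s a))).
Proof.
  apply pext; intros x z; rewrite ab_iff; unfold embed; split.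
  - intros [H1 H2]. exists x. rewrite s_idm. repeat split; auto.
    rewrite <- H1. symmetry; apply comp_idl.
  - intros [y [H1 [H2 [H3 H4]]]]. rewrite s_idm in H1. subst.
    rewrite <- H1, comp_idl. auto.
Qed.

Lemma inv_nf (C : Cat) (a b : Mor C) :
  pinv (pcomp (embed a) (adj b)) = pcomp (embed b) (adj a).
Proof.
  apply pext; intros x z; unfold pinv; rewrite !ab_iff; split;
  intros [y [H1 [H2 [H3 H4]]]]; exists y; auto.
Qed.

Lemma nf_mul (C : Cat) (Hlc : left_cancellative C) (Hsa : singly_aligned C) f g :
  NF C f -> NF C g -> NF C (pcomp f g).
Proof.
  intros [Hf | [a [b [Hab Hf]]]] [Hg | [c [t [Hct Hg]]]]; subst;
    try (left; apply pcomp_zero_r); try (left; apply pcomp_zero_l).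
  destruct (Hsa b c) as [Hn | [rho Hr]].
  - left. apply prod_none; auto.
  - assert (Hrr : rideal rho rho).
    { exists (idm (s rho)). rewrite r_idm, comp_idr. auto. }
    apply (proj2 (Hr rho)) in Hrr. destruct Hrr as [[c1 [Hc1 E1]] [b1 [Hb1 E2]]].
    right. exists (comp a c1), (comp t b1). split.
    + rewrite !s_comp by congruence.
      rewrite <- (s_comp C b c1), <- (s_comp C c b1) by auto. congruence.
    + apply (prod_some C Hlc a b c t rho b1 c1); auto.
Qed.

Lemma inS_nf (C : Cat) (Hlc : left_cancellative C) (Hsa : singly_aligned C) f :
  inS C f -> NF C f.
Proof.
  induction 1.
  - right. exists a, (idm (s a)). rewrite s_idm. split; auto. apply embed_nf.
  - left; auto.
  - apply nf_mul; auto.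
  - destruct IHinS as [Hf | [a [b [Hab Hf]]]]; subst.
    + left. apply pext; intros x y; split; intros [].
    + right. exists b, a. split; auto. apply inv_nf.
Qed.

Lemma nf_inS (C : Cat) f : NF C f -> inS C f.
Proof.
  intros [Hf | [a [b [Hab Hf]]]]; subst.
  - constructor.
  - apply inS_mul; [constructor | apply inS_inv; constructor].
Qed.

Theorem lemma4p11 (C : Cat) (Hlc : left_cancellative C) (Hsa : singly_aligned C) :
  (* S_Lambda = { alpha beta^* : s alpha = s beta } U {0} *)
  (forall f : pmap (Mor C),
      inS C f <->
      (f = pzero \/ exists a b : Mor C, s a = s b /\ f = pcomp (embed a) (adj b)))
  /\
  (* equality of alpha beta^* and gamma tau^* *)
  (forall a b c t : Mor C, s a = s b -> s c = s t ->
      (pcomp (embed a) (adj b) = pcomp (embed c) (adj t) <->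
       exists u : Mor C, invertible u /\ s a = r u /\ comp a u = c /\ comp b u = t))
  /\
  (* product formula *)
  (forall a b c t : Mor C, s a = s b -> s c = s t ->
      (forall rho b1 c1 : Mor C,
          s b = r c1 -> s c = r b1 ->
          rho = comp b c1 -> rho = comp c b1 ->
          (forall x, (rideal b x /\ rideal c x) <-> rideal rho x) ->
          pcomp (pcomp (embed a) (adj b)) (pcomp (embed c) (adj t))
          = pcomp (embed (comp a c1)) (adj (comp t b1)))
      /\
      ((forall x, ~ (rideal b x /\ rideal c x)) ->
          pcomp (pcomp (embed a) (adj b)) (pcomp (embed c) (adj t)) = pzero))
  /\
  (* products involving 0 *)
  (forall f : pmap (Mor C), inS C f -> pcomp f pzero = pzero /\ pcomp pzero f = pzero).
Proof.
  split; [|split; [|split]].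
  - intros f; split; [apply inS_nf; auto | apply nf_inS].
  - intros; apply eq_iff; auto.
  - intros a b c t Hab Hct; split.
    + intros; eapply prod_some; eauto.
    + intros; apply prod_none; auto.
  - intros f _; split; [apply pcomp_zero_r | apply pcomp_zero_l].
Qed.
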